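(* Let $\mathcal{G}$ be the Galilei group of transformations of $\mathbb{R}^4=\mathbb{R}^3\times\mathbb{R}$ of the form $x\mapsto \begin{pmatrix} S & w\\ 0^T & 1\end{pmatrix}x+b$ ($S\in SO(3)$, $w\in\mathbb{R}^3$, $b\in\mathbb{R}^4$), and let $C\mathcal{G}$ be the conformal Galilei group of transformations $x\mapsto \lambda\begin{pmatrix} S & w\\ 0^T & 1\end{pmatrix}x+b$ with additionally $\lambda>0$. Standard Newtonian simultaneity, i.e. the relation $(\mathbf{x},x^4)\sim(\mathbf{y},y^4)\iff x^4=y^4$, is the only nontrivial $\mathcal{G}$-invariant equivalence relation on $\mathbb{R}^4$ such that either (i) its equivalence classes are connected subspaces of $\mathbb{R}^4$, or (ii) it is $C\mathcal{G}$-invariant.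
   Context: An equivalence relation $\sim$ is invariant under a group of transformations if $x\sim y$ implies $g(x)\sim g(y)$ for all $x,y$ and all $g$ in the group. It is trivial if it is the total relation or the identity relation (diagonal). *)

(* Defs.v *)
From HB Require Import structures.
From mathcomp Require Import all_boot all_order all_algebra.
From mathcomp Require Import all_classical all_reals all_analysis.
Set Implicit Arguments. Unset Strict Implicit. Unset Printing Implicit Defensive.
Import Order.TTheory GRing.Theory Num.Theory.
Import numFieldNormedType.Exports.
Local Open Scope ring_scope.
Local Open Scope classical_set_scope.

(* Points of R^4 = R^3 x R are column vectors 'cV[R]_4; the last coordinate
   (index ord_max = 3) is the time coordinate x^4. *)

Definition SO3 (R : realType) (S : 'M[R]_3) : Prop :=
  S *m S^T = 1%:M /\ \det S = 1.

Definition galmat (R : realType) (S : 'M[R]_3) (w : 'cV[R]_3) : 'M[R]_4 :=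
  block_mx S w 0 1%:M.

Definition galilei (R : realType) (f : 'cV[R]_4 -> 'cV[R]_4) : Prop :=
  exists (S : 'M[R]_3) (w : 'cV[R]_3) (b : 'cV[R]_4),
    SO3 S /\ forall x, f x = galmat S w *m x + b.

Definition conf_galilei (R : realType) (f : 'cV[R]_4 -> 'cV[R]_4) : Prop :=
  exists (l : R) (S : 'M[R]_3) (w : 'cV[R]_3) (b : 'cV[R]_4),
    0 < l /\ SO3 S /\ forall x, f x = l *: (galmat S w *m x) + b.

Definition is_equivalence (T : Type) (r : T -> T -> Prop) : Prop :=
  (forall x, r x x) /\ (forall x y, r x y -> r y x) /\
  (forall x y z, r x y -> r y z -> r x z).

Definition invariant_under (T : Type) (grp : (T -> T) -> Prop)
  (r : T -> T -> Prop) : Prop :=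
  forall g, grp g -> forall x y, r x y -> r (g x) (g y).

Definition trivial_rel (T : Type) (r : T -> T -> Prop) : Prop :=
  (forall x y, r x y) \/ (forall x y, r x y <-> x = y).

Definition connected_classes (R : realType) (r : 'cV[R]_4 -> 'cV[R]_4 -> Prop)
  : Prop := forall x, connected [set y | r x y].

Definition newton_simul (R : realType) (x y : 'cV[R]_4) : Prop :=
  x ord_max 0 = y ord_max 0.

(* Main.v *)
Require Import Defs.
From HB Require Import structures.
From mathcomp Require Import all_boot all_order all_algebra.
From mathcomp Require Import all_classical all_reals all_analysis.
From mathcomp Require Import ring lra.
Set Implicit Arguments. Unset Strict Implicit. Unset Printing Implicit Defensive.
Import Order.TTheory GRing.Theory Num.Theory.
Import numFieldNormedType.Exports.
Local Open Scope ring_scope.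

Section M3.
Variable R : realType.
Definition vec3 (a b c : R) : 'cV[R]_3 := \col_(i < 3) nth 0 [:: a; b; c] i.
Definition mat3 (a b c d e f g h k : R) : 'M[R]_3 :=
  \matrix_(i < 3, j < 3) nth 0 (nth [::] [:: [:: a; b; c]; [:: d; e; f]; [:: g; h; k]] i) j.

Lemma mat3_vec3 a b c d e f g h k x y z :
  mat3 a b c d e f g h k *m vec3 x y z = vec3 (a*x+b*y+c*z) (d*x+e*y+f*z) (g*x+h*y+k*z).
Proof.
apply/matrixP => i j; rewrite !mxE !big_ord_recr big_ord0 /= !mxE /=.
by case: i => [[|[|[|?]]] ?] //=; rewrite add0r.
Qed.

Lemma mat3_tr a b c d e f g h k :
  (mat3 a b c d e f g h k)^T = mat3 a d g b e h c f k.
Proof.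
apply/matrixP => i j; rewrite !mxE.
by case: i => [[|[|[|?]]] ?] //=; case: j => [[|[|[|?]]] ?].
Qed.

Lemma mat3_mul a b c d e f g h k a' b' c' d' e' f' g' h' k' :
  mat3 a b c d e f g h k *m mat3 a' b' c' d' e' f' g' h' k' =
  mat3 (a*a'+b*d'+c*g') (a*b'+b*e'+c*h') (a*c'+b*f'+c*k')
       (d*a'+e*d'+f*g') (d*b'+e*e'+f*h') (d*c'+e*f'+f*k')
       (g*a'+h*d'+k*g') (g*b'+h*e'+k*h') (g*c'+h*f'+k*k').
Proof.
apply/matrixP => i j; rewrite !mxE !big_ord_recr big_ord0 /= !mxE /=.
by case: i => [[|[|[|?]]] ?] //=; case: j => [[|[|[|?]]] ?] //=; rewrite add0r.
Qed.

Lemma mat3_1 : 1%:M = mat3 1 0 0 0 1 0 0 0 1 :> 'M[R]_3.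
Proof.
apply/matrixP => i j; rewrite !mxE.
by case: i => [[|[|[|?]]] ?] //=; case: j => [[|[|[|?]]] ?].
Qed.

Lemma mat3_det a b c d e f g h k :
  \det (mat3 a b c d e f g h k) = a*(e*k - f*h) - b*(d*k - f*g) + c*(d*h-e*g).
Proof.
rewrite (expand_det_row _ 0) !big_ord_recr big_ord0 /=.
rewrite /cofactor !(expand_det_row _ 0) !big_ord_recr big_ord0 /= /cofactor.
rewrite !det_mx11 !mxE /=.
rewrite !big_ord0 !add0n; ring.
Qed.
End M3.
Section P.
Variable R : realType.
Definition pt (z : 'cV[R]_3) (t : R) : 'cV[R]_4 := col_mx z t%:M.
Definition tm (x : 'cV[R]_4) : R := x ord_max 0.
Definition up (x : 'cV[R]_4) : 'cV[R]_3 := @usubmx R 3 1 1 x.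

Lemma tm_pt z t : tm (pt z t) = t.
Proof.
rewrite /tm /pt; transitivity ((col_mx z t%:M : 'cV[R]_(3+1)) (rshift 3 (0:'I_1)) 0).
  by congr (_ _ _); exact: val_inj.
by rewrite col_mxEd mxE.
Qed.

Lemma pt_split x : x = pt (up x) (tm x).
Proof.
apply/matrixP => i j; rewrite /pt /up /tm mxE; case: splitP => k Hk.
  rewrite mxE; congr (x _ _); exact: val_inj.
rewrite mxE; rewrite (ord1 j) (ord1 k) eqxx mulr1n; congr (x _ _).
apply: val_inj => /=; rewrite Hk (ord1 k) //.
Qed.

Lemma ptD z t z' t' : pt z t + pt z' t' = pt (z + z') (t + t').
Proof. rewrite /pt raddfD. exact (add_col_mx z (t%:M) z' (t'%:M)). Qed.
Lemma ptN z t : - pt z t = pt (- z) (- t).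
Proof. rewrite /pt raddfN; exact (opp_col_mx z t%:M). Qed.
Lemma ptZ l z t : l *: pt z t = pt (l *: z) (l * t).
Proof. rewrite /pt -scale_scalar_mx; exact (scale_col_mx l z t%:M). Qed.
Lemma pt0 : pt 0 0 = 0.
Proof. rewrite /pt raddf0; exact (@col_mx0 R 3 1 1). Qed.
Lemma galmat_pt S w z t : galmat S w *m pt z t = pt (S *m z + t *: w) t.
Proof.
rewrite /galmat /pt.
transitivity (col_mx (S *m z + w *m t%:M) (0 *m z + 1%:M *m t%:M) : 'cV[R]_(3+1)).
  exact (mul_block_col S w 0 1%:M z t%:M).
by rewrite mul0mx add0r mul1mx mul_mx_scalar.
Qed.
Lemma galmat10 : galmat (1%:M : 'M[R]_3) 0 = 1%:M.
Proof. rewrite /galmat. exact (esym (@scalar_mx_block R 3 1 1)). Qed.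
Lemma SO3_1 : SO3 (1%:M : 'M[R]_3).
Proof. by split; [rewrite trmx1 mulmx1 | rewrite det1]. Qed.

Lemma tm_gal S w b x : tm (galmat S w *m x + b) = tm x + tm b.
Proof.
rewrite [x]pt_split [b]pt_split galmat_pt ptD !tm_pt //.
Qed.
Lemma tm_cgal l S w b x : tm (l *: (galmat S w *m x) + b) = l * tm x + tm b.
Proof.
rewrite [x]pt_split [b]pt_split galmat_pt ptZ ptD !tm_pt //.
Qed.
End P.

Section Vec.
Variable R : realType.
Implicit Types a b c : R.

Lemma vec3_eta (z : 'cV[R]_3) : z = vec3 (z 0 0) (z 1 0) (z 2%:R 0).
Proof.
apply/matrixP => i j; rewrite !mxE (ord1 j).
by case: i => [[|[|[|?]]] ?] //=; congr (z _ _); apply: val_inj.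
Qed.

Lemma vec3D a b c a' b' c' : vec3 a b c + vec3 a' b' c' = vec3 (a+a') (b+b') (c+c').
Proof. by apply/matrixP => i j; rewrite !mxE; case: i => [[|[|[|?]]] ?] //=; rewrite addr0. Qed.

Lemma vec3_000 : vec3 0 0 0 = 0 :> 'cV[R]_3.
Proof. by apply/matrixP => i j; rewrite !mxE; case: i => [[|[|[|?]]] ?]. Qed.

Lemma SO3_D1 : SO3 (mat3 1 0 0 0 (-1) 0 0 0 (-1) : 'M[R]_3).
Proof.
split; [rewrite mat3_tr mat3_mul mat3_1; congr mat3 | rewrite mat3_det]; ring.
Qed.

Lemma SO3_P : SO3 (mat3 0 0 1 1 0 0 0 1 0 : 'M[R]_3).
Proof.
split; [rewrite mat3_tr mat3_mul mat3_1; congr mat3 | rewrite mat3_det]; ring.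
Qed.

Lemma SO3_rxy c d : c * c + d * d = 1 -> SO3 (mat3 c (-d) 0 d c 0 0 0 1 : 'M[R]_3).
Proof.
move=> H.
split; [rewrite mat3_tr mat3_mul mat3_1; congr mat3 | rewrite mat3_det];
  by [ring | transitivity (c * c + d * d); [ring | exact H]].
Qed.

Lemma fill (P : R -> Prop) e : 0 < e -> (forall a b, P a -> P b -> P (a+b)) ->
  (forall u, `|u| <= e -> P u) -> forall u, P u.
Proof.
move=> e0 Padd Pe u.
pose m := Num.bound (`|u| / e).
have hn : `|u| / e < m.+1%:R.
  apply: (lt_le_trans (archi_boundP _)); first by rewrite divr_ge0 // ltW.
  by rewrite ler_nat.
have n0 : (0 < m.+1%:R :> R) by rewrite ltr0n.
have -> : u = (u / m.+1%:R) *+ m.+1 by rewrite -mulr_natr divfK // pnatr_eq0.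
have Pu : P (u / m.+1%:R).
  apply: Pe; rewrite normrM normfV normr_nat ler_pdivrMr //.
  by move: hn; rewrite ltr_pdivrMr // mulrC => /ltW.
have key : forall x k, P x -> P (x *+ k.+1).
  move=> x; elim=> [|k IH] Px; first by rewrite mulr1n.
  by rewrite mulrS; apply: Padd => //; apply: IH.
exact: key.
Qed.
End Vec.

Section Part1.
Variable R : realType.
Local Open Scope classical_set_scope.

Lemma up_pt (z : 'cV[R]_3) t : up (pt z t) = z.
Proof. exact (col_mxKu z t%:M). Qed.

Lemma tm0 : tm (0 : 'cV[R]_4) = 0.
Proof. by rewrite /tm mxE. Qed.

Lemma tmB (x y : 'cV[R]_4) : tm (y - x) = tm y - tm x.
Proof. by rewrite /tm !mxE. Qed.

Lemma newton_conn (x : 'cV[R]_4) : connected [set y | newton_simul x y].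
Proof.
have -> : [set y | newton_simul x y] = \bigcup_(y in [set y | newton_simul x y])
   ((fun s : R => x + s *: (y - x)) @` `[0, 1]).
  apply/seteqP; split.
    move=> y Hy; exists y => //; exists 1.
      by rewrite /= in_itv /= ler01 lexx.
    by rewrite scale1r addrC subrK.
  move=> _ [y Hy [s _ <-]]; rewrite /newton_simul /= !mxE.
  by move: Hy; rewrite /newton_simul => <-; rewrite subrr mulr0 addr0.
apply: bigcup_connected.
  exists x => y _; exists 0; first by rewrite /= in_itv /= lexx ler01.
  by rewrite scale0r addr0.
move=> y _; apply: connected_continuous_connected; first exact: segment_connected.
apply: continuous_subspaceT => s.
have h1 : {for s, continuous (fun _ : R => x)} by exact: cst_continuous.
have h2 : {for s, continuous (fun t : R => t *: (y - x))} by exact: scalel_continuous.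
exact (@continuousD R _ R (fun _ : R => x) (fun t : R => t *: (y - x)) s h1 h2).
Qed.

Lemma part1 :
  is_equivalence (@newton_simul R) /\
   invariant_under (@galilei R) (@newton_simul R) /\
   ~ trivial_rel (@newton_simul R) /\
   connected_classes (@newton_simul R) /\
   invariant_under (@conf_galilei R) (@newton_simul R).
Proof.
split; first by rewrite /newton_simul; split=> //; split=> [x y ->|x y z -> ->].
split.
  move=> g [S [w [b [_ Hg]]]] x y; rewrite /newton_simul !Hg => H.
  by have := tm_gal S w b x; rewrite /tm => ->; rewrite H -(tm_gal S w b y).
split.
  case=> [Htot | Hid].
    have := Htot 0 (pt 0 1); rewrite /newton_simul.
    by have := tm_pt 0 1; rewrite /tm => ->; rewrite mxE => /eqP; rewrite eq_sym oner_eq0.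
  have : pt (const_mx 1) 0 = 0 :> 'cV[R]_4.
    apply: (proj1 (Hid (pt (const_mx 1) 0) 0)); rewrite /newton_simul.
    by have := tm_pt (const_mx 1) 0; rewrite /tm => ->; rewrite mxE.
  move=> /(congr1 (@up R)); rewrite up_pt => /matrixP /(_ 0 0).
  by rewrite !mxE => /eqP; rewrite oner_eq0.
split; first by move=> x; exact: newton_conn.
move=> g [l [S [w [b [_ [_ Hg]]]]]] x y; rewrite /newton_simul !Hg => H.
by have := tm_cgal l S w b x; rewrite /tm => ->; rewrite H -(tm_cgal l S w b y).
Qed.
End Part1.

Section Part2.
Variable R : realType.
Local Open Scope classical_set_scope.
Variable r : 'cV[R]_4 -> 'cV[R]_4 -> Prop.
Hypothesis Heq : is_equivalence r.
Hypothesis Hinv : invariant_under (@galilei R) r.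

Let rrefl := proj1 Heq.
Let rsym := proj1 (proj2 Heq).
Let rtrans := proj2 (proj2 Heq).

Lemma transl (b : 'cV[R]_4) : galilei (fun x => x + b).
Proof. by exists 1%:M, 0, b; split; [exact: SO3_1 | move=> x; rewrite galmat10 mul1mx]. Qed.

Lemma linG S w : SO3 S -> galilei (fun x : 'cV[R]_4 => galmat S w *m x).
Proof. by move=> HS; exists S, w, 0; split => // x; rewrite addr0. Qed.

Lemma rK x y : r x y <-> r 0 (y - x).
Proof.
split=> H.
  by have := Hinv (transl (- x)) H; rewrite subrr.
by have := Hinv (transl x) H; rewrite add0r subrK.
Qed.

Lemma Kneg v : r 0 v -> r 0 (- v).
Proof. by move=> H; have := Hinv (transl (- v)) H; rewrite add0r subrr => /rsym. Qed.

Lemma Kadd u v : r 0 u -> r 0 v -> r 0 (u + v).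
Proof.
move=> Hu Hv; have := Hinv (transl u) Hv; rewrite add0r addrC => H.
exact: rtrans Hu H.
Qed.

Lemma Kgal S w v : SO3 S -> r 0 v -> r 0 (galmat S w *m v).
Proof. by move=> HS Hv; have := Hinv (linG w HS) Hv; rewrite mulmx0. Qed.

Definition K3 z := r 0 (pt z 0).

Lemma K3rot S z : SO3 S -> K3 z -> K3 (S *m z).
Proof. by move=> HS Hz; have := Kgal 0 HS Hz; rewrite galmat_pt scale0r addr0. Qed.

Lemma K3add z z' : K3 z -> K3 z' -> K3 (z + z').
Proof. by move=> H H'; have := Kadd H H'; rewrite ptD addr0. Qed.

Lemma Lfrom a b c : K3 (vec3 a b c) -> K3 (vec3 (a + a) 0 0).
Proof.
move=> H; have := K3add H (K3rot (SO3_D1 R) H); rewrite mat3_vec3 vec3D.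
by congr (r 0 (pt (vec3 _ _ _) _)); ring.
Qed.

Lemma K3P a b c : K3 (vec3 a b c) -> K3 (vec3 c a b).
Proof.
move=> H; have := K3rot (SO3_P R) H; rewrite mat3_vec3.
by congr (r 0 (pt (vec3 _ _ _) _)); ring.
Qed.

Lemma Lrot s c : K3 (vec3 s 0 0) -> `|c| <= 1 -> K3 (vec3 (c * s + c * s) 0 0).
Proof.
move=> H hc.
pose d := Num.sqrt (1 - c * c).
have hd : c * c + d * d = 1.
  have [hc1 hc2] : -1 <= c /\ c <= 1 by move: hc; rewrite ler_norml => /andP.
  have e : d * d = 1 - c * c.
    by rewrite /d -[X in X = _]expr2 sqr_sqrtr //; nra.
  by rewrite e; ring.
have hd' : c * c + (- d) * (- d) = 1 by rewrite mulrNN.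
have := K3add (K3rot (SO3_rxy hd) H) (K3rot (SO3_rxy hd') H).
rewrite !mat3_vec3 vec3D; congr (r 0 (pt (vec3 _ _ _) _)); ring.
Qed.

Lemma Sp : (exists v, v != 0 /\ r 0 v) -> forall z, K3 z.
Proof.
move=> [v [vn0 Kv]] z'.
rewrite [v]pt_split in vn0 Kv.
move: vn0 Kv; set z := up v; set t := tm v => vn0 Kv.
case: (eqVneq t 0) => [t0|tn0]; last first.
  have := Kgal (t^-1 *: z') (SO3_1 R) Kv; rewrite galmat_pt mul1mx scalerA mulfV // scale1r => H.
  have := Kadd H (Kneg Kv); rewrite ptN ptD subrr.
  by rewrite addrAC subrr add0r.
rewrite t0 in vn0 Kv.
have zn0 : z != 0 by apply: contraNneq vn0 => ->; rewrite pt0.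
have [s [sn0 Ls]] : exists s, s != 0 /\ K3 (vec3 s 0 0).
  rewrite [z]vec3_eta in zn0 Kv.
  move: zn0 Kv; set a := z 0 0; set b := z 1 0; set c := z 2%:R 0 => zn0 Kv.
  have K1 := Kv; have K2 := K3P Kv; have K3' := K3P K2.
  have [a0|an0] := eqVneq a 0; last first.
    exists (a + a); split; last exact: Lfrom K1.
    by apply: contra an0 => /eqP h; apply/eqP; lra.
  have [c0|cn0] := eqVneq c 0; last first.
    exists (c + c); split; last exact: Lfrom K2.
    by apply: contra cn0 => /eqP h; apply/eqP; lra.
  have [b0|bn0] := eqVneq b 0; last first.
    exists (b + b); split; last exact: Lfrom K3'.
    by apply: contra bn0 => /eqP h; apply/eqP; lra.
  by move: zn0; rewrite a0 b0 c0 vec3_000 eqxx.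
have Lall : forall u, K3 (vec3 u 0 0).
  apply: (@fill R (fun u => K3 (vec3 u 0 0)) (`|s| + `|s|)).
  - have : 0 < `|s| by rewrite normr_gt0.
    by move=> h; lra.
  - by move=> a b Ha Hb; have := K3add Ha Hb; rewrite vec3D !addr0.
  move=> u hu.
  have -> : u = (u / (s + s)) * s + (u / (s + s)) * s.
    have ss : s + s != 0 by apply: contra sn0 => /eqP h; apply/eqP; lra.
    by rewrite -mulrDr divfK.
  apply: Lrot => //.
  rewrite normrM normfV ler_pdivrMr; last first.
    by rewrite normr_gt0; apply: contra sn0 => /eqP h; apply/eqP; lra.
  rewrite mul1r; apply: (le_trans hu).
  by rewrite -!mulr2n normrMn.
rewrite [z']vec3_eta.
set x1 := z' 0 0; set x2 := z' 1 0; set x3 := z' 2%:R 0.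
have E : vec3 x1 x2 x3 = vec3 x1 0 0 + vec3 0 x2 0 + vec3 0 0 x3.
  by rewrite !vec3D; congr vec3; ring.
rewrite E; apply: K3add; first apply: K3add.
- exact: Lall.
- exact: K3P (Lall x2).
- exact: K3P (K3P (Lall x3)).
Qed.

Lemma main2 : ~ trivial_rel r ->
  (connected_classes r \/ invariant_under (@conf_galilei R) r) ->
  forall x y, r x y <-> newton_simul x y.
Proof.
move=> Hnt Hor.
have Hex : exists v, v != 0 /\ r 0 v.
  apply: contrapT => Hno; apply: Hnt; right => x y; split; last by move=> ->.
  move/rK => H; case: (eqVneq (y - x) 0) => [/eqP|n0].
    by rewrite subr_eq0 => /eqP ->.
  by exfalso; apply: Hno; exists (y - x).
have HS := Sp Hex.
suff Ht : forall v, r 0 v -> tm v = 0.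
  move=> x y; rewrite rK /newton_simul; split.
    by move/Ht; rewrite tmB /tm => /eqP; rewrite subr_eq0 => /eqP ->.
  move=> H; rewrite [y - x]pt_split.
  have -> : tm (y - x) = 0 by rewrite tmB /tm H subrr.
  exact: HS.
move=> v Kv; apply: contrapT => Hn.
have Tt : r 0 (pt 0 (tm v)).
  by have := Kadd Kv (Kneg (HS (up v))); rewrite ptN {1}[v]pt_split ptD subrr oppr0 addr0.
move: Hn Tt; set t0 := tm v => Hn Tt.
have t0n : t0 != 0 by apply/eqP.
have Tall : forall s, r 0 (pt 0 s).
  case: Hor => [Hcon | Hc].
    have Hc0 := Hcon 0.
    have Himg : is_interval (@tm R @` [set y | r 0 y]).
      apply/connected_intervalP; apply: connected_continuous_connected => //.
      apply: continuous_subspaceT => w; exact: coord_continuous.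
    have Tn : forall s, r 0 (pt 0 s) -> r 0 (pt 0 (- s)).
      by move=> s H; have := Kneg H; rewrite ptN oppr0.
    have Ta : r 0 (pt 0 `|t0|).
      have [h|h] := lerP 0 t0; first by rewrite ger0_norm.
      by rewrite ltr0_norm //; apply: Tn.
    have Tpos : forall s, 0 <= s <= `|t0| -> r 0 (pt 0 s).
      move=> s hs; have [w Kw <-] : (@tm R @` [set y | r 0 y]) s.
        apply: (Himg 0 `|t0|) => //.
          by exists 0; [exact: rrefl | exact: tm0].
        by exists (pt 0 `|t0|) => //; exact: tm_pt.
      by have := Kadd Kw (Kneg (HS (up w))); rewrite ptN {1}[w]pt_split ptD subrr oppr0 addr0.
    apply: (@fill R (fun s => r 0 (pt 0 s)) `|t0|).
    - by rewrite normr_gt0.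
    - by move=> a b Ha Hb; have := Kadd Ha Hb; rewrite ptD addr0.
    move=> u hu; have [h|h] := lerP 0 u.
      by apply: Tpos; rewrite h; rewrite ger0_norm in hu.
    have := Tn (- u) (Tpos (- u) _); rewrite opprK; apply.
    by rewrite ltr0_norm in hu => //; rewrite hu andbT oppr_ge0 ltW.
  have Ksc : forall l w, 0 < l -> r 0 w -> r 0 (l *: w).
    move=> l w hl Hw.
    have Hg : conf_galilei (fun x : 'cV[R]_4 => l *: x).
      exists l, 1%:M, 0, 0; split=> //; split; first exact: SO3_1.
      by move=> x; rewrite galmat10 mul1mx addr0.
    by have := Hc _ Hg 0 w Hw; rewrite scaler0.
  move=> s; have [s0|sn0] := eqVneq s 0; first by rewrite s0 pt0; apply: rrefl.
  pose l := s / t0.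
  have E : pt 0 s = l *: pt 0 t0 by rewrite ptZ scaler0 /l divfK.
  case: (ltrgtP l 0) => hl.
  - have hl' : 0 < - l by rewrite oppr_gt0.
    by have := Kneg (Ksc _ _ hl' Tt); rewrite scaleNr opprK -E.
  - by rewrite E; apply: Ksc.
  - by move: hl; rewrite /l => /eqP; rewrite mulf_eq0 invr_eq0 (negbTE sn0) (negbTE t0n).
apply: Hnt; left => x y; apply/rK; rewrite [y - x]pt_split.
by have := Kadd (HS (up (y - x))) (Tall (tm (y - x))); rewrite ptD add0r addr0.
Qed.
End Part2.

Theorem proposition3p7 (R : realType) :
  (is_equivalence (@newton_simul R) /\
   invariant_under (@galilei R) (@newton_simul R) /\
   ~ trivial_rel (@newton_simul R) /\
   connected_classes (@newton_simul R) /\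
   invariant_under (@conf_galilei R) (@newton_simul R)) /\
  (forall r : 'cV[R]_4 -> 'cV[R]_4 -> Prop,
     is_equivalence r ->
     invariant_under (@galilei R) r ->
     ~ trivial_rel r ->
     (connected_classes r \/ invariant_under (@conf_galilei R) r) ->
     forall x y, r x y <-> newton_simul x y).
Proof.
split; first exact: part1.
by move=> r Heq Hinv; apply: main2.
Qed.
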